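(* Let $p\in(0,1)$, $\beta\in(0,\infty)$, and $f(x)=-\ln[p+(1-p)e^{-x}]$. Set $$A:=2f(\beta)-f(2\beta),\qquad B:=f(\beta)+f(2\beta)-f(3\beta).$$ Let $n,k$ be integers with $c:=k\ln(1/p)/\ln n\le 2$. Let $q,q'$ be integers with $0\le q,q'\le k$. Let $g_1,\dots,g_9\ge0$ be integers satisfying $$g_1+g_2+g_3\le k-q,\quad g_4+g_5+g_6\le q,\quad g_7+g_8+g_9\le k-q,$$ $$g_1+g_4+g_7\le k-q',\quad g_2+g_5+g_8\le q',\quad g_3+g_6+g_9\le k-q',$$ and put $g=g_1+\dots+g_9$. Define $$C_1=A(g_5+g_6+g_8+g_9),\quad C_3=A(g_4+g_5+g_7+g_8),$$ $$C_7=A(g_2+g_3+g_5+g_6),\quad C_9=A(g_1+g_2+g_4+g_5),$$ $$C_2=A(g_4+g_6+g_7+g_9)+B(g_5+g_8),\quad C_4=A(g_2+g_3+g_8+g_9)+B(g_5+g_6),$$ $$C_6=A(g_1+g_2+g_7+g_8)+B(g_4+g_5),\quad C_8=A(g_1+g_3+g_4+g_6)+B(g_2+g_5),$$ $$C_5=A(g_1+g_3+g_7+g_9)+B(g_2+g_4+g_6+g_8),$$ and $$\Psi=\frac{g_5(g_5-1)}{2}\big(2f(2\beta)-f(4\beta)\big)+\frac12\sum_{r=1}^9 g_rC_r.$$ Then $\Psi\le\bar\Psi(q,q',g,g_5)$, where $$\bar\Psi=\frac{g_5(g_5-1)}{2}\big(2f(2\beta)-f(4\beta)\big)+\frac12\big(f(\beta)+f(2\beta)-f(3\beta)\big)\big((k\wedge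 g)+g_5\big)(g-g_5).$$
   Context: $k\wedge g$ denotes $\min(k,g)$. *)

(* Defs.v *)
From Stdlib Require Import Reals Lra Lia.
Open Scope R_scope.

Definition f (p x : R) : R := - ln (p + (1 - p) * exp (- x)).

Definition Acoef (p beta : R) : R := 2 * f p beta - f p (2 * beta).
Definition Bcoef (p beta : R) : R := f p beta + f p (2 * beta) - f p (3 * beta).

Definition Psi (p beta : R) (g1 g2 g3 g4 g5 g6 g7 g8 g9 : nat) : R :=
  let A := Acoef p beta in
  let B := Bcoef p beta in
  let G1 := INR g1 in let G2 := INR g2 in let G3 := INR g3 in
  let G4 := INR g4 in let G5 := INR g5 in let G6 := INR g6 in
  let G7 := INR g7 in let G8 := INR g8 in let G9 := INR g9 in
  let C1 := A * (G5 + G6 + G8 + G9) in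
  let C3 := A * (G4 + G5 + G7 + G8) in
  let C7 := A * (G2 + G3 + G5 + G6) in
  let C9 := A * (G1 + G2 + G4 + G5) in
  let C2 := A * (G4 + G6 + G7 + G9) + B * (G5 + G8) in
  let C4 := A * (G2 + G3 + G8 + G9) + B * (G5 + G6) in
  let C6 := A * (G1 + G2 + G7 + G8) + B * (G4 + G5) in
  let C8 := A * (G1 + G3 + G4 + G6) + B * (G2 + G5) in
  let C5 := A * (G1 + G3 + G7 + G9) + B * (G2 + G4 + G6 + G8) in
  G5 * (G5 - 1) / 2 * (2 * f p (2 * beta) - f p (4 * beta))
  + / 2 * (G1 * C1 + G2 * C2 + G3 * C3 + G4 * C4 + G5 * C5
           + G6 * C6 + G7 * C7 + G8 * C8 + G9 * C9).

(* \bar Psi(q, q', g, g5); it does not actually depend on q, q'. *)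
Definition Psibar (p beta : R) (k : nat) (q q' g g5 : nat) : R :=
  INR g5 * (INR g5 - 1) / 2 * (2 * f p (2 * beta) - f p (4 * beta))
  + / 2 * (f p beta + f p (2 * beta) - f p (3 * beta))
        * (INR (Nat.min k g) + INR g5) * (INR g - INR g5).

(* Main.v *)
Require Import Defs.
From Stdlib Require Import Reals Lra Lia.
Open Scope R_scope.

Lemma AB_facts (p beta : R) : 0 < p < 1 -> 0 < beta ->
  0 <= Acoef p beta /\ Acoef p beta <= Bcoef p beta.
Proof.
  intros [hp0 hp1] hb.
  set (u := exp (- beta)).
  assert (hu : 0 < u) by apply exp_pos.
  assert (e2 : exp (- (2 * beta)) = u * u).
  { unfold u; rewrite <- exp_plus; f_equal; ring. }
  assert (e3 : exp (- (3 * beta)) = u * u * u).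
  { unfold u; rewrite <- !exp_plus; f_equal; ring. }
  set (a := p + (1 - p) * u).
  set (b := p + (1 - p) * (u * u)).
  set (c := p + (1 - p) * (u * u * u)).
  assert (q1 : 0 < 1 - p) by lra.
  assert (ha : 0 < a) by (unfold a; pose proof (Rmult_lt_0_compat _ _ q1 hu); lra).
  assert (hb' : 0 < b) by (unfold b; pose proof (Rmult_lt_0_compat _ _ q1 (Rmult_lt_0_compat _ _ hu hu)); lra).
  assert (hc : 0 < c) by (unfold c; pose proof (Rmult_lt_0_compat _ _ q1 (Rmult_lt_0_compat _ _ (Rmult_lt_0_compat _ _ hu hu) hu)); lra).
  assert (Ae : Acoef p beta = ln b - ln a - ln a).
  { unfold Acoef, Defs.f; rewrite e2; fold u a b; ring. }
  assert (Be : Bcoef p beta = ln c - ln a - ln b).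
  { unfold Bcoef, Defs.f; rewrite e2, e3; fold u a b c; ring. }
  rewrite Ae, Be.
  assert (h1 : a * a <= b).
  { assert (b - a * a = p * (1 - p) * ((1 - u) * (1 - u))) by (unfold a, b; ring).
    assert (0 <= p * (1 - p) * ((1 - u) * (1 - u))).
    { apply Rmult_le_pos; [apply Rmult_le_pos; lra|apply Rle_0_sqr]. } lra. }
  assert (h2 : b * b <= a * c).
  { assert (a * c - b * b = p * (1 - p) * (u * ((1 - u) * (1 - u)))) by (unfold a, b, c; ring).
    assert (0 <= p * (1 - p) * (u * ((1 - u) * (1 - u)))).
    { apply Rmult_le_pos; [apply Rmult_le_pos; lra|]. apply Rmult_le_pos; [lra|apply Rle_0_sqr]. } lra. }
  assert (l1 : ln (a * a) <= ln b).
  { destruct (Req_dec (a*a) b) as [E|E]; [rewrite E; lra|].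
    left; apply ln_increasing; nra. }
  assert (l2 : ln (b * b) <= ln (a * c)).
  { destruct (Req_dec (b*b) (a*c)) as [E|E]; [rewrite E; lra|].
    left; apply ln_increasing; nra. }
  rewrite !ln_mult in l1 by lra. rewrite !ln_mult in l2 by lra.
  lra.
Qed.

Theorem lemma3p1 (p beta : R) (n k q q' g1 g2 g3 g4 g5 g6 g7 g8 g9 : nat) :
  0 < p < 1 ->
  0 < beta ->
  INR k * ln (/ p) / ln (INR n) <= 2 ->
  (q <= k)%nat -> (q' <= k)%nat ->
  (g1 + g2 + g3 <= k - q)%nat ->
  (g4 + g5 + g6 <= q)%nat ->
  (g7 + g8 + g9 <= k - q)%nat ->
  (g1 + g4 + g7 <= k - q')%nat ->
  (g2 + g5 + g8 <= q')%nat ->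
  (g3 + g6 + g9 <= k - q')%nat ->
  Psi p beta g1 g2 g3 g4 g5 g6 g7 g8 g9
    <= Psibar p beta k q q' (g1 + g2 + g3 + g4 + g5 + g6 + g7 + g8 + g9) g5.
Proof.
  intros hp hb _ Hq Hq' H1 H2 H3 H4 H5 H6.
  destruct (AB_facts p beta hp hb) as [hA hAB].
  set (m := Nat.min k (g1 + g2 + g3 + g4 + g5 + g6 + g7 + g8 + g9)).
  assert (w1 : (g5 + g6 + g8 + g9 <= m)%nat) by (unfold m; lia).
  assert (w3 : (g4 + g5 + g7 + g8 <= m)%nat) by (unfold m; lia).
  assert (w7 : (g2 + g3 + g5 + g6 <= m)%nat) by (unfold m; lia).
  assert (w9 : (g1 + g2 + g4 + g5 <= m)%nat) by (unfold m; lia).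
  assert (w2 : (g4 + g5 + g6 + g7 + g8 + g9 <= m)%nat) by (unfold m; lia).
  assert (w8 : (g1 + g2 + g3 + g4 + g5 + g6 <= m)%nat) by (unfold m; lia).
  assert (w4 : (g2 + g3 + g5 + g6 + g8 + g9 <= m)%nat) by (unfold m; lia).
  assert (w6 : (g1 + g2 + g4 + g5 + g7 + g8 <= m)%nat) by (unfold m; lia).
  apply le_INR in w1, w2, w3, w4, w6, w7, w8, w9.
  rewrite !plus_INR in w1. rewrite !plus_INR in w2. rewrite !plus_INR in w3. rewrite !plus_INR in w4. rewrite !plus_INR in w6. rewrite !plus_INR in w7. rewrite !plus_INR in w8. rewrite !plus_INR in w9.
  unfold Psi, Psibar; cbv zeta. fold m. rewrite !plus_INR.
  pose proof (pos_INR g1) as P1. pose proof (pos_INR g2) as P2. pose proof (pos_INR g3) as P3.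
  pose proof (pos_INR g4) as P4. pose proof (pos_INR g5) as P5. pose proof (pos_INR g6) as P6.
  pose proof (pos_INR g7) as P7. pose proof (pos_INR g8) as P8. pose proof (pos_INR g9) as P9.
  set (G1 := INR g1) in *. set (G2 := INR g2) in *. set (G3 := INR g3) in *.
  set (G4 := INR g4) in *. set (G5 := INR g5) in *. set (G6 := INR g6) in *.
  set (G7 := INR g7) in *. set (G8 := INR g8) in *. set (G9 := INR g9) in *.
  set (M := INR m) in *.
  set (A := Acoef p beta) in *. set (B := Bcoef p beta) in *.
  set (X := G1 * (G5 + G6 + G8 + G9) + G2 * (G4 + G6 + G7 + G9)
     + G3 * (G4 + G5 + G7 + G8) + G4 * (G2 + G3 + G8 + G9)
     + G5 * (G1 + G3 + G7 + G9) + G6 * (G1 + G2 + G7 + G8)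
     + G7 * (G2 + G3 + G5 + G6) + G8 * (G1 + G3 + G4 + G6)
     + G9 * (G1 + G2 + G4 + G5)).
  set (S := G1 * (G5 + G6 + G8 + G9) + G2 * (G4 + G5 + G6 + G7 + G8 + G9)
     + G3 * (G4 + G5 + G7 + G8) + G4 * (G2 + G3 + G5 + G6 + G8 + G9)
     + G6 * (G1 + G2 + G4 + G5 + G7 + G8)
     + G7 * (G2 + G3 + G5 + G6) + G8 * (G1 + G2 + G3 + G4 + G5 + G6)
     + G9 * (G1 + G2 + G4 + G5)).
  assert (hX : 0 <= X) by (unfold X; nra).
  assert (hS : S <= M * (G1 + G2 + G3 + G4 + G6 + G7 + G8 + G9)).
  { unfold S.
    pose proof (Rmult_le_compat_l G1 _ _ P1 w1).
    pose proof (Rmult_le_compat_l G2 _ _ P2 w2).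
    pose proof (Rmult_le_compat_l G3 _ _ P3 w3).
    pose proof (Rmult_le_compat_l G4 _ _ P4 w4).
    pose proof (Rmult_le_compat_l G6 _ _ P6 w6).
    pose proof (Rmult_le_compat_l G7 _ _ P7 w7).
    pose proof (Rmult_le_compat_l G8 _ _ P8 w8).
    pose proof (Rmult_le_compat_l G9 _ _ P9 w9).
    lra. }
  assert (K1 : 0 <= (B - A) * X) by (apply Rmult_le_pos; lra).
  assert (K2 : 0 <= B * (M * (G1 + G2 + G3 + G4 + G6 + G7 + G8 + G9) - S))
    by (apply Rmult_le_pos; lra).
  assert (E : forall Z : R, Z + / 2 * (Defs.f p beta + Defs.f p (2 * beta) - Defs.f p (3 * beta))
      * (M + G5) * (G1 + G2 + G3 + G4 + G5 + G6 + G7 + G8 + G9 - G5)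
      - (Z + / 2 * (G1 * (A * (G5 + G6 + G8 + G9)) +
       G2 * (A * (G4 + G6 + G7 + G9) + B * (G5 + G8)) +
       G3 * (A * (G4 + G5 + G7 + G8)) +
       G4 * (A * (G2 + G3 + G8 + G9) + B * (G5 + G6)) +
       G5 * (A * (G1 + G3 + G7 + G9) + B * (G2 + G4 + G6 + G8)) +
       G6 * (A * (G1 + G2 + G7 + G8) + B * (G4 + G5)) +
       G7 * (A * (G2 + G3 + G5 + G6)) +
       G8 * (A * (G1 + G3 + G4 + G6) + B * (G2 + G5)) +
       G9 * (A * (G1 + G2 + G4 + G5))))
      = / 2 * ((B - A) * X + B * (M * (G1 + G2 + G3 + G4 + G6 + G7 + G8 + G9) - S))).
  { intro Z. unfold X, S, A, B, Bcoef. ring. }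
  match goal with |- ?L <= ?R => 
    assert (R - L >= 0); [|lra] end.
  rewrite E. lra.
Qed.
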